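(* Let $\tau\in\mathbb N$ and $f:\mathbb Z_+\times\mathbb R\to\mathbb R$, continuous in $x$, be asymptotically $\tau$-periodic in time, $f=P+R$. Assume: the $\tau$-periodic solutions of $x(t+1)=P(t,x(t))$ are isolated; every $g\in H^+(f)$ is strictly increasing in $x$; and the solution $\varphi(t,u_0,f)$ of $x(t+1)=f(t,x(t))$, $x(0)=u_0$, is bounded on $\mathbb Z_+$. Then $\varphi(t,u_0,f)$ is asymptotically $\tau$-periodic: there is a $\tau$-periodic sequence $p$ with $\varphi(t,u_0,f)-p(t)\to0$ as $t\to\infty$.
   Context: Asymptotically $\tau$-periodic in time: $f=P+R$ with $P(t+\tau,x)=P(t,x)$ for all $(t,x)$ and $\lim_{t\to\infty}R(t,x)=0$ uniformly in $x$ on compact subsets of $\mathbb R$. $H^+(f)$ is the closure of $\{f(\cdot+h,\cdot):h\in\mathbb Z_+\}$ in the topology of uniform convergence on finite $t$-sets times compact $x$-sets. A $\tau$-periodic solution $\varphi(t,u_0,P)$ (i.e. $\varphi(\tau,u_0,P)=u_0$) of $x(t+1)=P(t,x(t))$ is isolated if there is $\delta>0$ such that no $u\neq u_0$ with $|u-u_0|<\delta$ gives a $\tau$-periodic solution. *)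

(* Defs.v *)
From Stdlib Require Import Reals Lra.
Open Scope R_scope.

Fixpoint sol (F : nat -> R -> R) (u0 : R) (t : nat) : R :=
  match t with
  | O => u0
  | S t' => F t' (sol F u0 t')
  end.

Definition periodic_in_time (tau : nat) (P : nat -> R -> R) : Prop :=
  forall t x, P (t + tau)%nat x = P t x.

(* R(t,x) -> 0 as t -> oo, uniformly in x on compact subsets of R
   (every compact set lies in some [-M, M]). *)
Definition vanishes_unif_compact (Rm : nat -> R -> R) : Prop :=
  forall M eps, 0 < eps -> exists T : nat,
    forall t x, (T <= t)%nat -> Rabs x <= M -> Rabs (Rm t x) < eps.

Definition asympt_periodic_decomp (tau : nat) (f P Rm : nat -> R -> R) : Prop :=
  (forall t x, f t x = P t x + Rm t x) /\
  periodic_in_time tau P /\ vanishes_unif_compact Rm.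

Definition periodic_solutions_isolated (tau : nat) (P : nat -> R -> R) : Prop :=
  forall u0, sol P u0 tau = u0 ->
    exists delta, 0 < delta /\
      forall u, u <> u0 -> Rabs (u - u0) < delta -> sol P u tau <> u.

(* g belongs to the hull H^+(f): closure of the translates f(.+h, .), h in Z_+,
   for uniform convergence on finite t-sets times compact x-sets
   (basic neighbourhoods: t in {0..N}, |x| <= M, accuracy eps). *)
Definition in_hull (f g : nat -> R -> R) : Prop :=
  forall (N : nat) (M eps : R), 0 < eps -> exists h : nat,
    forall t x, (t <= N)%nat -> Rabs x <= M ->
      Rabs (f (t + h)%nat x - g t x) < eps.

Definition strictly_increasing_in_x (g : nat -> R -> R) : Prop :=
  forall t x y, x < y -> g t x < g t y.

(* Main.v *)
Require Import Defs.
From Stdlib Require Import Reals Lra Lia.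
From Coquelicot Require Import Rbar Lim_seq.
Open Scope R_scope.

Lemma sol_mono (g : nat -> R -> R) : (forall t x y, x < y -> g t x < g t y) ->
  forall j w w', w <= w' -> sol g w j <= sol g w' j.
Proof.
  intros Hg j; induction j; intros w w' H; simpl; auto.
  destruct (Rle_lt_or_eq_dec _ _ (IHj w w' H)) as [h|h].
  - left; apply Hg; auto.
  - rewrite h; lra.
Qed.

Lemma sol_shift f u0 s j : sol f u0 (s + j) = sol (fun t => f (s + t)%nat) (sol f u0 s) j.
Proof.
  induction j; simpl.
  - now rewrite Nat.add_0_r.
  - rewrite Nat.add_succ_r. simpl. now rewrite IHj.
Qed.

Lemma per_iter tau (P : nat -> R -> R) : periodic_in_time tau P ->
  forall k t x, P (k*tau + t)%nat x = P t x.
Proof.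
  intros H; induction k; intros; simpl. reflexivity.
  replace (tau + k*tau + t)%nat with ((k*tau + t) + tau)%nat by lia.
  rewrite H. apply IHk.
Qed.

Lemma P_cont tau (f P Rm : nat -> R -> R) : (0 < tau)%nat ->
  asympt_periodic_decomp tau f P Rm -> (forall t, continuity (f t)) ->
  forall j s eps, 0 < eps -> exists d, 0 < d /\
    forall x, Rabs (x - s) < d -> Rabs (P j x - P j s) < eps.
Proof.
  intros Htau [Hf [Hp Hv]] Hc j s eps He.
  destruct (Hv (Rabs s + 1) (eps/3)) as [T HT]. lra.
  set (t := (T*tau + j)%nat).
  assert (Pt: forall x, P j x = f t x - Rm t x).
  { intros x. rewrite Hf. unfold t. rewrite (per_iter tau P Hp). ring. }
  assert (Hct := Hc t s).
  unfold continuity_pt, continue_in, limit1_in, limit_in in Hct.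
  destruct (Hct (eps/3)) as [d' [Hd' Hd]]. lra.
  exists (Rmin d' 1). split. apply Rmin_pos; lra.
  intros x Hx. rewrite !Pt.
  assert (H1: Rabs (f t x - f t s) < eps/3).
  { destruct (Req_dec x s) as [E|E].
    - subst; rewrite Rminus_diag, Rabs_R0; lra.
    - apply Hd; split. split; [exact I| auto].
      simpl; unfold R_dist. eapply Rlt_le_trans; [exact Hx| apply Rmin_l]. }
  assert (Hxs : Rabs x <= Rabs s + 1).
  { pose proof (Rabs_triang (x - s) s). replace (x - s + s) with x in H by ring.
    pose proof (Rmin_r d' 1). lra. }
  assert (H2: Rabs (Rm t x) < eps/3) by (apply HT; [unfold t; nia| exact Hxs]).
  assert (H3: Rabs (Rm t s) < eps/3) by (apply HT; [unfold t; nia| lra]).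
  apply Rabs_def2 in H1; apply Rabs_def2 in H2; apply Rabs_def2 in H3.
  apply Rabs_def1; lra.
Qed.

Lemma lemA tau (f P Rm : nat -> R -> R) : (0 < tau)%nat ->
  asympt_periodic_decomp tau f P Rm -> (forall t, continuity (f t)) ->
  forall (w : nat -> R) q, Un_cv w q -> forall j,
  Un_cv (fun k => sol (fun t => f (k*tau + t)%nat) (w k) j) (sol P q j).
Proof.
  intros Htau Hdec Hc w q Hw j.
  pose proof Hdec as [Hf [Hp Hv]].
  induction j.
  - exact Hw.
  - intros eps He. simpl.
    destruct (P_cont tau f P Rm Htau Hdec Hc j (sol P q j) (eps/2)) as [d [Hd HP]]. lra.
    destruct (IHj (Rmin d 1)) as [K1 HK1]. apply Rmin_pos; lra.
    destruct (Hv (Rabs (sol P q j) + 1) (eps/2)) as [T HT]. lra.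
    exists (max K1 T). intros k Hk. unfold R_dist.
    set (z := sol (fun t => f (k*tau + t)%nat) (w k) j).
    assert (Hz: Rabs (z - sol P q j) < Rmin d 1) by (apply HK1; lia).
    rewrite Hf. rewrite (per_iter tau P Hp k j).
    assert (H1: Rabs (P j z - P j (sol P q j)) < eps/2).
    { apply HP; eapply Rlt_le_trans; [exact Hz| apply Rmin_l]. }
    assert (Hxs : Rabs z <= Rabs (sol P q j) + 1).
    { pose proof (Rabs_triang (z - sol P q j) (sol P q j)).
      replace (z - sol P q j + sol P q j) with z in H by ring.
      pose proof (Rmin_r d 1). lra. }
    assert (H2: Rabs (Rm (k*tau + j)%nat z) < eps/2) by (apply HT; [nia| exact Hxs]).
    apply Rabs_def2 in H1; apply Rabs_def2 in H2.
    apply Rabs_def1; lra.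
Qed.

Theorem mainTheorem19 (tau : nat) (f P Rm : nat -> R -> R) (u0 : R) :
  (0 < tau)%nat ->
  (forall t, continuity (f t)) ->
  asympt_periodic_decomp tau f P Rm ->
  periodic_solutions_isolated tau P ->
  (forall g, in_hull f g -> strictly_increasing_in_x g) ->
  (exists B, forall t, Rabs (sol f u0 t) <= B) ->
  exists p : nat -> R,
    (forall t, p (t + tau)%nat = p t) /\
    Un_cv (fun t => sol f u0 t - p t) 0.
Proof.
  intros Htau Hc Hdec Hiso Hmono [B HB].
  pose proof Hdec as [Hf [Hp Hv]].
  assert (Hinc: strictly_increasing_in_x f).
  { apply Hmono. intros N M eps He. exists 0%nat. intros t x _ _.
    rewrite Nat.add_0_r, Rminus_diag, Rabs_R0; lra. }
  assert (Hinc' : forall s, forall t x y, x < y -> f (s + t)%nat x < f (s + t)%nat y).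
  { intros s t x y; apply Hinc. }
  set (y := fun k => sol f u0 (k*tau)%nat).
  assert (Hy: forall k, y (S k) = sol (fun t => f (k*tau + t)%nat) (y k) tau).
  { intros; unfold y. rewrite Nat.mul_succ_l. apply sol_shift. }
  assert (Hconst : forall c : R, Un_cv (fun _ => c) c).
  { intros c eps He; exists 0%nat; intros; unfold R_dist; rewrite Rminus_diag, Rabs_R0; lra. }
  assert (Htrap: forall c, (forall N, exists n, (N<=n)%nat /\ y n < c) ->
                 (forall N, exists n, (N<=n)%nat /\ c < y n) -> sol P c tau = c).
  { intros c Hlo Hhi.
    pose proof (lemA tau f P Rm Htau Hdec Hc (fun _ => c) c (Hconst c) tau) as HA.
    simpl in HA.
    destruct (Rtotal_order (sol P c tau) c) as [Hlt|[Heq|Hgt]]; auto; exfalso.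
    - destruct (HA (c - sol P c tau)) as [K HK]. lra.
      assert (step: forall k, (K <= k)%nat -> y k <= c -> y (S k) < c).
      { intros k Hk Hyk. rewrite Hy.
        eapply Rle_lt_trans. apply sol_mono. apply Hinc'. exact Hyk.
        specialize (HK k Hk). unfold R_dist in HK. apply Rabs_def2 in HK. lra. }
      destruct (Hlo K) as [n [Hn Hyn]].
      assert (all: forall m, y (n + m)%nat < c).
      { induction m. rewrite Nat.add_0_r; auto.
        rewrite Nat.add_succ_r. apply step. lia. lra. }
      destruct (Hhi n) as [n' [Hn' Hyn']].
      specialize (all (n' - n)%nat). replace (n + (n' - n))%nat with n' in all by lia. lra.
    - destruct (HA (sol P c tau - c)) as [K HK]. lra.
      assert (step: forall k, (K <= k)%nat -> c <= y k -> c < y (S k)).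
      { intros k Hk Hyk. rewrite Hy.
        eapply Rlt_le_trans. 2: apply sol_mono; [apply Hinc'| exact Hyk].
        specialize (HK k Hk). unfold R_dist in HK. apply Rabs_def2 in HK. lra. }
      destruct (Hhi K) as [n [Hn Hyn]].
      assert (all: forall m, c < y (n + m)%nat).
      { induction m. rewrite Nat.add_0_r; auto.
        rewrite Nat.add_succ_r. apply step. lia. lra. }
      destruct (Hlo n) as [n' [Hn' Hyn']].
      specialize (all (n' - n)%nat). replace (n + (n' - n))%nat with n' in all by lia. lra. }
  assert (Hyq: exists q, Un_cv y q).
  { destruct (ex_LimSup_seq y) as [Ls HLs].
    destruct (ex_LimInf_seq y) as [Li HLi].
    assert (HBy : forall k, - B <= y k <= B).
    { intros k; unfold y; pose proof (HB (k*tau)%nat) as h.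
      apply Rabs_le_between in h || (unfold Rabs in h; destruct Rcase_abs in h; lra). }
    destruct Ls as [L| |]; simpl in HLs.
    2:{ exfalso. destruct (HLs B 0%nat) as [n [_ h]]. specialize (HBy n). lra. }
    2:{ exfalso. destruct (HLs (-B)) as [N h]. specialize (h N (le_n _)). specialize (HBy N). lra. }
    destruct Li as [l| |]; simpl in HLi.
    2:{ exfalso. destruct (HLi B) as [N h]. specialize (h N (le_n _)). specialize (HBy N). lra. }
    2:{ exfalso. destruct (HLi (-B) 0%nat) as [n [_ h]]. specialize (HBy n). lra. }
    assert (Hall : forall c, l < c < L -> sol P c tau = c).
    { intros c [h1 h2]. apply Htrap.
      - intros N. destruct (proj1 (HLi (mkposreal (c - l) ltac:(lra))) N) as [n [Hn h]].
        exists n; split; auto. simpl in h; lra.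
      - intros N. destruct (proj1 (HLs (mkposreal (L - c) ltac:(lra))) N) as [n [Hn h]].
        exists n; split; auto. simpl in h; lra. }
    destruct (Rtotal_order l L) as [Hlt|[Heq|Hgt]].
    - exfalso.
      set (c0 := (l + L) / 2).
      assert (Hc0 : sol P c0 tau = c0) by (apply Hall; unfold c0; lra).
      destruct (Hiso c0 Hc0) as [delta [Hdel Hd]].
      set (c1 := c0 + Rmin delta (L - c0) / 2).
      assert (Hm1 := Rmin_l delta (L - c0)).
      assert (Hm2 := Rmin_r delta (L - c0)).
      assert (Hm0 : 0 < Rmin delta (L - c0)) by (apply Rmin_pos; unfold c0; lra).
      apply (Hd c1).
      + unfold c1; lra.
      + unfold c1. replace (c0 + Rmin delta (L - c0) / 2 - c0) with (Rmin delta (L - c0) / 2) by ring.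
        rewrite Rabs_pos_eq; lra.
      + apply Hall. unfold c1, c0 in *; lra.
    - subst. exists L. apply is_lim_seq_Reals.
      apply is_LimSup_LimInf_lim_seq; simpl; auto.
    - exfalso.
      destruct (proj2 (HLs (mkposreal ((l - L)/2) ltac:(lra)))) as [N1 h1].
      destruct (proj2 (HLi (mkposreal ((l - L)/2) ltac:(lra)))) as [N2 h2].
      specialize (h1 (max N1 N2) ltac:(lia)). specialize (h2 (max N1 N2) ltac:(lia)).
      simpl in h1, h2. lra. }
  destruct Hyq as [q Hq].
  exists (fun t => sol P q (t mod tau)).
  split.
  { intros t. f_equal. rewrite Nat.Div0.add_mod, Nat.Div0.mod_same, Nat.add_0_r.
    apply Nat.Div0.mod_mod. }
  pose proof (lemA tau f P Rm Htau Hdec Hc y q Hq) as HA.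
  assert (Hunif: forall n eps, 0 < eps -> exists K, forall j k, (j < n)%nat -> (K <= k)%nat ->
            Rabs (sol f u0 (k*tau + j) - sol P q j) < eps).
  { induction n; intros eps He.
    - exists 0%nat; intros; lia.
    - destruct (IHn eps He) as [K1 HK1].
      destruct (HA n eps He) as [K2 HK2].
      exists (max K1 K2). intros j k Hj Hk.
      destruct (Nat.eq_dec j n) as [E|E].
      + subst j. rewrite sol_shift. apply HK2. lia.
      + apply HK1; lia. }
  intros eps He.
  destruct (Hunif tau eps He) as [K HK].
  exists (K * tau)%nat. intros t Ht. unfold R_dist. rewrite Rminus_0_r.
  pose proof (Nat.div_mod_eq t tau) as E.
  pose proof (Nat.mod_upper_bound t tau ltac:(lia)) as E2.
  set (k := (t / tau)%nat) in *. set (j := (t mod tau)%nat) in *.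
  assert (Hk : (K <= k)%nat).
  { destruct (Compare_dec.le_lt_dec K k); auto. exfalso. nia. }
  replace t with (k * tau + j)%nat at 1 by lia.
  apply HK; auto.
Qed.
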